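(* Let $A$ be a finite skew brace with $(A,+)$ abelian such that $\Theta(A)$ has exactly one vertex. Then $A$ is isomorphic to one of: (1) $\mathbb{Z}/4\mathbb{Z}$ with its usual addition and $x\circ y=x+y+2xy$; (2) $\mathbb{Z}/2\mathbb{Z}\times\mathbb{Z}/2\mathbb{Z}$ with componentwise addition and $(x_1,y_1)\circ(x_2,y_2)=(x_1+x_2+y_1y_2,\,y_1+y_2)$; (3) $\mathbb{Z}/2\mathbb{Z}\times\mathbb{Z}/4\mathbb{Z}$ with componentwise addition and $(x_1,y_1)\circ(x_2,y_2)=\big(x_1+x_2+\varepsilon(y_1)y_2,\,y_1+y_2+2y_1y_2\big)$, where $\varepsilon(y_1)=0$ if $y_1\in\{0,1\}$ and $\varepsilon(y_1)=1$ if $y_1\in\{2,3\}$, and $\varepsilon(y_1)y_2$ is computed in $\mathbb{Z}/2\mathbb{Z}$.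
   Context: A skew brace is a triple $(A,+,\circ)$ where $(A,+)$ and $(A,\circ)$ are groups with $a\circ(b+c)=a\circ b-a+a\circ c$. $\lambda_a(b)=-a+a\circ b$; $\theta_{(a,b)}(c)=a+\lambda_b(c)-a$ defines an action of $(A,+)\rtimes_\lambda(A,\circ)$ on $(A,+)$ by automorphisms. $\Theta(A)$ is the graph whose vertices are the $\theta$-orbits of size $>1$, two distinct vertices $L_1,L_2$ adjacent iff $\gcd(|L_1|,|L_2|)\ne1$. *)

(* Defs.v *)
From mathcomp Require Import all_boot all_algebra.
Set Implicit Arguments. Unset Strict Implicit. Unset Printing Implicit Defensive.
Import GRing.Theory.
Local Open Scope ring_scope.

(* A skew brace (A,+,o) whose additive group is the (abelian) group of the
   zmodType T; circ is the second operation. *)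
Definition is_skew_brace (T : zmodType) (circ : T -> T -> T) : Prop :=
  [/\ associative circ,
      (exists e : T, left_id e circ /\ right_id e circ /\
         forall a : T, exists b : T, circ a b = e /\ circ b a = e)
    & forall a b c : T, circ a (b + c) = circ a b - a + circ a c].

Definition brace_lambda (T : zmodType) (circ : T -> T -> T) (a b : T) : T :=
  - a + circ a b.

Definition brace_theta (T : zmodType) (circ : T -> T -> T) (a b c : T) : T :=
  a + brace_lambda circ b c - a.

Definition theta_orbit (T : finZmodType) (circ : T -> T -> T) (c : T) : {set T} :=
  [set brace_theta circ a b c | a : T, b : T].

Definition Theta_vertices (T : finZmodType) (circ : T -> T -> T) : {set {set T}} :=
  [set theta_orbit circ c | c : T & 1 < #|theta_orbit circ c|]%N.

Definition brace_iso (T U : zmodType) (circ : T -> T -> T) (circU : U -> U -> U)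
  (f : T -> U) : Prop :=
  [/\ bijective f, forall x y, f (x + y) = f x + f y
    & forall x y, f (circ x y) = circU (f x) (f y)].

Definition circ1 (x y : 'Z_4) : 'Z_4 := x + y + 2 * x * y.

Definition circ2 (p q : 'Z_2 * 'Z_2) : 'Z_2 * 'Z_2 :=
  (p.1 + q.1 + p.2 * q.2, p.2 + q.2).

Definition eps_mul (y1 y2 : 'Z_4) : 'Z_2 :=
  if (val y1 < 2)%N then 0 else (val y2)%:R.

Definition circ3 (p q : 'Z_2 * 'Z_4) : 'Z_2 * 'Z_4 :=
  (p.1 + q.1 + eps_mul p.2 q.2, p.2 + q.2 + 2 * p.2 * q.2).

(* Main.v *)
Require Import Defs.
From mathcomp Require Import all_boot all_algebra.
Set Implicit Arguments. Unset Strict Implicit. Unset Printing Implicit Defensive.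
Import GRing.Theory.
Local Open Scope ring_scope.

Section Basic.
Variable T : finZmodType.
Variable circ : T -> T -> T.
Hypothesis Hb : is_skew_brace circ.

Notation lam := (brace_lambda circ).

Lemma circ_dist a b c : circ a (b + c) = circ a b - a + circ a c.
Proof. by case: Hb. Qed.

Lemma circA : associative circ.
Proof. by case: Hb. Qed.

Lemma circa0 a : circ a 0 = a.
Proof.
have := circ_dist a 0 0; rewrite addr0 -addrA => H.
have /addrI : circ a 0 + 0 = circ a 0 + (- a + circ a 0) by rewrite addr0 {1}H.
by move/eqP; rewrite eq_sym addrC subr_eq0 => /eqP.
Qed.

Lemma circ0a a : circ 0 a = a.
Proof.
case: Hb => _ [e [le [re _]]] _.
have : e = 0 by rewrite -(le 0) circa0.
by move=> E; rewrite -E le.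
Qed.

Lemma circ_inv a : exists b, circ a b = 0 /\ circ b a = 0.
Proof.
case: Hb => _ [e [le [re inv]]] _.
have E : e = 0 by rewrite -(le 0) circa0.
by rewrite -E.
Qed.

Lemma circ_inj a : injective (circ a).
Proof.
move=> u v H; have [b [_ H2]] := circ_inv a.
by rewrite -(circ0a u) -(circ0a v) -H2 -!circA H.
Qed.

Lemma circE a b : circ a b = a + lam a b.
Proof. by rewrite /brace_lambda addrA subrr add0r. Qed.

Lemma lamD a u v : lam a (u + v) = lam a u + lam a v.
Proof. by rewrite /brace_lambda circ_dist -!addrA. Qed.

Lemma lam0 a : lam a 0 = 0.
Proof. by rewrite /brace_lambda circa0 addNr. Qed.

Lemma lamN a u : lam a (- u) = - lam a u.
Proof.
apply/esym/addr0_eq; by rewrite -lamD subrr lam0.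
Qed.

Lemma lamB a u v : lam a (u - v) = lam a u - lam a v.
Proof. by rewrite lamD lamN. Qed.

Lemma lamMn a u n : lam a (u *+ n) = lam a u *+ n.
Proof.
elim: n => [|n IH]; first by rewrite !mulr0n lam0.
by rewrite !mulrS lamD IH.
Qed.

Lemma lam0x u : lam 0 u = u.
Proof. by rewrite /brace_lambda circ0a oppr0 add0r. Qed.

Lemma lam_circ a b c : lam (circ a b) c = lam a (lam b c).
Proof.
have Hn : circ a (- b) = a + a - circ a b.
  have := circ_dist a b (- b); rewrite subrr circa0 => H.
  apply/eqP; rewrite eq_sym subr_eq {1}H.
  rewrite addrAC subrK addrC //.
rewrite /brace_lambda circ_dist Hn circA.
rewrite !addrA addNr add0r; congr (_ + _); by rewrite addrAC subrr add0r.
Qed.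

Lemma lam_inj a : injective (lam a).
Proof. move=> u v; rewrite /brace_lambda => /addrI; exact: circ_inj. Qed.

Definition fixb c := [forall b, lam b c == c].
Definition orb c := [set lam b c | b : T].

Lemma fixbP c : reflect (forall b, lam b c = c) (fixb c).
Proof. by apply: (iffP forallP) => H b; [apply/eqP|apply/eqP]. Qed.

Lemma fix0 : fixb 0.
Proof. by apply/fixbP => b; rewrite lam0. Qed.

Lemma fixD u v : fixb u -> fixb v -> fixb (u + v).
Proof. by move=> /fixbP Hu /fixbP Hv; apply/fixbP => b; rewrite lamD Hu Hv. Qed.

Lemma fixN u : fixb u -> fixb (- u).
Proof. by move=> /fixbP Hu; apply/fixbP => b; rewrite lamN Hu. Qed.

Lemma fixNE u : fixb (- u) = fixb u.
Proof. by apply/idP/idP => [/fixN|/fixN]; rewrite ?opprK. Qed.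

Lemma fixMn u n : fixb u -> fixb (u *+ n).
Proof. by move=> /fixbP Hu; apply/fixbP => b; rewrite lamMn Hu. Qed.

Lemma fixDl u v : fixb v -> fixb (u + v) = fixb u.
Proof.
move=> Hv; apply/idP/idP => H; last exact: fixD.
by rewrite -(addrK v u); apply: fixD => //; apply: fixN.
Qed.

Lemma theta_orbitE c : theta_orbit circ c = orb c.
Proof.
apply/setP => y; apply/imset2P/imsetP => [[a b _ _ ->]|[b _ ->]].
  by exists b => //; rewrite /brace_theta addrC addrA addNr add0r.
by exists 0 b => //; rewrite /brace_theta add0r subr0.
Qed.

Lemma orb_self c : c \in orb c.
Proof. by apply/imsetP; exists 0 => //; rewrite lam0x. Qed.

Lemma orb_lam b c : lam b c \in orb c.
Proof. by apply/imsetP; exists b. Qed.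

Lemma orb_sub y c : y \in orb c -> orb y = orb c.
Proof.
case/imsetP => b _ ->; apply/setP => z; apply/imsetP/imsetP => [[a _ ->]|[a _ ->]].
  by exists (circ a b) => //; rewrite lam_circ.
have [b' [H1 H2]] := circ_inv b.
exists (circ a b') => //; by rewrite -lam_circ -circA H2 circa0.
Qed.

Lemma card_orb c : (1 < #|orb c|)%N = ~~ fixb c.
Proof.
apply/idP/idP => [H|/forallPn [b /eqP Hb']].
  apply/negP => /fixbP Hf.
  have : orb c \subset [set c].
    by apply/subsetP => y /imsetP [b _ ->]; rewrite Hf set11.
  by move/subset_leq_card; rewrite cards1 leqNgt H.
have : [set c; lam b c] \subset orb c.
  by apply/subsetP => y; rewrite !inE => /orP [] /eqP ->; rewrite ?orb_self ?orb_lam.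
move/subset_leq_card; rewrite cards2; case: eqP => [E|_ H] //.
by rewrite -E in Hb'.
Qed.

End Basic.

Lemma modMn (V : zmodType) (u : V) n m : u *+ n = 0 -> u *+ (m %% n) = u *+ m.
Proof.
by move=> H; rewrite {2}(divn_eq m n) mulnC mulrnDr mulrnA H mul0rn add0r.
Qed.

Lemma valZ4D (p q : 'Z_4) : val (p + q) = ((val p + val q) %% 4)%N.
Proof. by []. Qed.

Lemma valZ2D (p q : 'Z_2) : val (p + q) = ((val p + val q) %% 2)%N.
Proof. by []. Qed.

Lemma pairD (U V : zmodType) (p q : U * V) : p + q = (p.1 + q.1, p.2 + q.2).
Proof. by []. Qed.

Lemma inj_add (U V : zmodType) (g : U -> V) :
  (forall p q, g (p + q) = g p + g q) -> (forall r, g r = 0 -> r = 0) -> injective g.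
Proof.
move=> gadd gker p q E; apply/eqP; rewrite -subr_eq0; apply/eqP; apply: gker.
have : g (p - q) + g q = g p by rewrite -gadd subrK.
by rewrite E => /eqP; rewrite -{2}(add0r (g q)) (can_eq (addrK _)) => /eqP.
Qed.

Lemma iso_of (T : finZmodType) (U : zmodType) (circ : T -> T -> T) (circU : U -> U -> U)
  (g : U -> T) : injective g -> (forall t, exists u, g u = t) ->
  (forall p q, g (p + q) = g p + g q) ->
  (forall p q, g (circU p q) = circ (g p) (g q)) ->
  exists f, brace_iso circ circU f.
Proof.
move=> ginj gsurj gadd gcirc.
have ex t : exists u, g u == t by have [u <-] := gsurj t; exists u.
pose f t := xchoose (ex t).
have fK : cancel f g by move=> t; apply/eqP/(xchooseP (ex t)).
have gK : cancel g f by move=> u; apply: ginj; rewrite fK.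
exists f; split.
- by exists g.
- by move=> a b; rewrite -{1}(fK a) -{1}(fK b) -gadd gK.
- by move=> a b; rewrite -{1}(fK a) -{1}(fK b) -gcirc gK.
Qed.

Section Main.
Variable T : finZmodType.
Variable circ : T -> T -> T.
Hypothesis Hb : is_skew_brace circ.
Notation lam := (brace_lambda circ).
Notation fixb := (fixb circ).
Notation orb := (orb circ).
Variable x : T.
Hypothesis Hx : ~~ fixb x.
Hypothesis HO : forall c, ~~ fixb c -> c \in orb x.

Lemma inO c : (c \in orb x) = ~~ fixb c.
Proof.
apply/idP/idP; last exact: HO.
by move=> H; rewrite -card_orb // (orb_sub Hb H) card_orb.
Qed.

Lemma card_fiber y : y \in orb x ->
  #|[set b | lam b x == y]| = #|[set b | lam b x == x]|.
Proof.
case/imsetP => c _ ->.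
have -> : [set b | lam b x == lam c x] = circ c @: [set b | lam b x == x].
  apply/setP => z; rewrite inE; apply/eqP/imsetP => [H|[b]].
    have [c' [H1 H2]] := circ_inv Hb c.
    exists (circ c' z); last by rewrite circA // H1 circ0a.
    by rewrite inE lam_circ // H -lam_circ // H2 lam0x.
  by rewrite inE => /eqP Hb' ->; rewrite lam_circ // Hb'.
by rewrite card_imset //; apply: circ_inj.
Qed.

Lemma card_T : #|T| = (#|orb x| * #|[set b | lam b x == x]|)%N.
Proof.
rewrite -[#|T|]sum1_card (partition_big (fun b => lam b x) (mem (orb x))) /=; last first.
  by move=> i _; apply: orb_lam.
rewrite -sum_nat_const; apply: eq_bigr => y Hy.
by rewrite sum1dep_card -(card_fiber Hy); apply: eq_card => z; rewrite !inE.
Qed.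

Lemma O_shift y : ~~ fixb y -> fixb (y - x).
Proof.
move=> Hy.
have Hd : (#|orb x| %| #|~: orb x|)%N.
  by rewrite -(dvdn_addr _ (dvdnn #|orb x|)) cardsC card_T dvdn_mulr.
have H0 : 0 \in ~: orb x by rewrite inE inO negbK fix0.
have Hle : (#|orb x| <= #|~: orb x|)%N.
  by apply: dvdn_leq => //; apply/card_gt0P; exists 0.
have Hsub : (fun f => x + f) @: (~: orb x) \subset orb x.
  apply/subsetP => z /imsetP [f]; rewrite inE inO negbK => Hf ->.
  by rewrite inO fixDl.
have : (fun f => x + f) @: (~: orb x) == orb x.
  have Hc : #|(fun f => x + f) @: (~: orb x)| = #|~: orb x| by apply: card_imset => u v /addrI.
  by rewrite eqEcard Hsub Hc.
move/eqP => E; have : y \in orb x by rewrite inO.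
rewrite -E => /imsetP [f]; rewrite inE inO negbK => Hf ->.
by rewrite addrC addKr.
Qed.

Definition dd a := lam a x - x.

Lemma fix_lam a y : fixb y -> lam a y = y.
Proof. by move/fixbP. Qed.

Lemma dfix a : fixb (dd a).
Proof. by apply: O_shift; rewrite -inO orb_lam. Qed.

Lemma lamO a y : ~~ fixb y -> lam a y = y + dd a.
Proof.
move=> Hy.
have E : lam a y = lam a (y - x) + lam a x by rewrite -lamD // subrK.
by rewrite E (fix_lam _ (O_shift Hy)) /dd addrAC -addrA.
Qed.

Lemma circF a b : circ a b = a + b + (if fixb b then 0 else dd a).
Proof.
rewrite circE //; case: ifP => H.
  by rewrite fix_lam ?H // addr0.
by rewrite lamO ?H // addrA.
Qed.

Lemma dd_circ a b : dd (circ a b) = dd a + dd b.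
Proof.
rewrite /dd lam_circ // (lamO b Hx) lamD // (fix_lam _ (dfix b)).
by rewrite [x + dd b]addrC addrK addrAC.
Qed.

Lemma xx_fix : fixb (x + x).
Proof.
have := O_shift (y := - x); rewrite (fixNE Hb) => /(_ Hx).
by rewrite -opprD (fixNE Hb).
Qed.

Lemma dd2 a : dd a + dd a = 0.
Proof.
have := fix_lam a xx_fix; rewrite lamD // (lamO a Hx) addrACA.
by rewrite -{2}(addr0 (x + x)) => /addrI.
Qed.

Lemma dd_surj f : fixb f -> exists a, dd a = f.
Proof.
move=> Hf; have : x + f \in orb x by rewrite inO fixDl.
case/imsetP => b _ E; exists b; by rewrite /dd -E addrC addKr.
Qed.

Lemma fix2 f : fixb f -> f + f = 0.
Proof. by move=> /dd_surj [a <-]; apply: dd2. Qed.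

Lemma fixopp f : fixb f -> - f = f.
Proof. by move=> Hf; apply: addr0_eq; apply: fix2. Qed.

Lemma ddDf u f : fixb f -> dd (u + f) = dd u + dd f.
Proof.
move=> Hf; have := dd_circ u f; by rewrite circF Hf addr0.
Qed.

Lemma dd0 : dd 0 = 0.
Proof. by rewrite /dd lam0x // subrr. Qed.

Lemma ddd f : fixb f -> dd (dd f) = 0.
Proof.
move=> Hf; have := dd_circ f x; rewrite circF (negbTE Hx) (addrC f x) -addrA.
rewrite ddDf; last by apply: fixD => //; apply: dfix.
rewrite ddDf ?dfix // addrA [dd f + _]addrC.
by rewrite -{2}(addr0 (dd x + dd f)) => /addrI.
Qed.

Lemma ddxx : dd (x + x) = dd (dd x).
Proof.
have := dd_circ x x; rewrite circF (negbTE Hx) ddDf ?dfix // dd2.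
by move/addr0_eq => <-; rewrite fixopp ?dfix.
Qed.

Lemma ddO u : ~~ fixb u -> dd u = dd x + dd (u - x).
Proof. by move=> Hu; rewrite -ddDf ?O_shift // addrC subrK. Qed.

Lemma dd_nz : exists a, dd a != 0.
Proof.
move: Hx => /forallPn [b Hb']; exists b.
by rewrite /dd subr_eq0.
Qed.

Lemma fix_nf_add u v : ~~ fixb u -> fixb (u + v) = ~~ fixb v.
Proof.
move=> Hu; case Hv: (fixb v) => /=.
  by rewrite fixDl // (negbTE Hu).
have E : u + v = (u - x) + (v - x) + (x + x).
  by rewrite addrACA !subrK.
rewrite E; apply: fixD => //; last exact: xx_fix.
by apply: fixD => //; apply: O_shift; rewrite ?Hv.
Qed.

Lemma fixMn_odd u n : ~~ fixb u -> fixb (u *+ n) = ~~ odd n.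
Proof.
move=> Hu; elim: n => [|n IH]; first by rewrite mulr0n fix0.
by rewrite mulrS fix_nf_add // IH /= negbK.
Qed.

Lemma ddMn f n : fixb f -> dd (f *+ n) = dd f *+ n.
Proof.
move=> Hf; elim: n => [|n IH]; first by rewrite !mulr0n dd0.
by rewrite !mulrSr ddDf // IH.
Qed.

Lemma shift_any z t : ~~ fixb z -> ~~ fixb t -> fixb (t - z).
Proof.
move=> Hz Ht; have -> : t - z = (t - x) - (z - x).
  by rewrite opprB addrC addrA subrK addrC.
by apply: fixD => //; [apply: O_shift | apply: fixN => //; apply: O_shift].
Qed.

Lemma dd_nf z u : ~~ fixb z -> fixb u -> dd (z + u) = dd z + dd u.
Proof. by move=> _ Hu; rewrite ddDf. Qed.

Lemma fixg f n u : ~~ fixb u -> fixb f -> fixb (f + u *+ n) = ~~ odd n.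
Proof. by move=> Hu Hf; rewrite addrC fixDl // fixMn_odd. Qed.

Lemma nf_ne0 u : ~~ fixb u -> u <> 0.
Proof. by move=> Hu E; rewrite E fix0 in Hu. Qed.

Lemma caseA (HA : forall f, fixb f -> dd f = 0) :
  (exists f : T -> 'Z_4, brace_iso circ circ1 f) \/
  (exists f : T -> 'Z_2 * 'Z_2, brace_iso circ circ2 f).
Proof.
set δ := dd x.
have ddA u : dd u = if fixb u then 0 else δ.
  case: ifP => Hu; first exact: HA.
  by rewrite (ddO (negbT Hu)) (HA (u - x)) ?addr0 //; apply: O_shift; rewrite Hu.
have fixA f : fixb f -> f = 0 \/ f = δ.
  move=> Hf; have [a <-] := dd_surj Hf; rewrite ddA; case: ifP; by [left|right].
have Hd : δ != 0.
  by have [a] := dd_nz; rewrite ddA; case: ifP => //; rewrite eqxx.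
have Hdf : fixb δ := dfix x.
have Hdd : δ + δ = 0 := fix2 Hdf.
have allA t : [\/ t = 0, t = δ, t = x | t = x + δ].
  case Ht: (fixb t); first by case: (fixA t Ht) => ->; [constructor 1|constructor 2].
  case: (fixA _ (O_shift (negbT Ht))) => E.
    by constructor 3; rewrite -(subrK x t) E add0r.
  by constructor 4; rewrite -(subrK x t) E addrC.
case: (fixA _ xx_fix) => Exx.
- right.
  pose g := fun p : 'Z_2 * 'Z_2 => δ *+ val p.1 + x *+ val p.2.
  have gadd p q : g (p + q) = g p + g q.
    rewrite /g pairD /= (@modMn _ δ 2) ?mulr2n // (@modMn _ x 2) ?mulr2n //.
    by rewrite !mulrnDr addrACA.
  apply: (@iso_of _ _ _ _ g) => //.
  + apply: inj_add => //.
    move=> [[[|[|e]] He] [[|[|y]] Hy]] //= H; try by apply/eqP.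
    * by move: H; rewrite /g /= mulr0n mulr1n add0r => /(nf_ne0 Hx).
    * by move: H Hd; rewrite /g /= mulr0n mulr1n addr0 => ->; rewrite eqxx.
    * move: H; rewrite /g /= !mulr1n addrC => E; exfalso; move: Hx; by rewrite -(fixDl Hb x Hdf) E fix0.
  + move=> t; case: (allA t) => ->.
    * by exists (0, 0); rewrite /g /= !mulr0n addr0.
    * by exists (1, 0); rewrite /g /= mulr1n mulr0n addr0.
    * by exists (0, 1); rewrite /g /= mulr1n mulr0n add0r.
    * by exists (1, 1); rewrite /g /= !mulr1n addrC.
  + move=> p q; have -> : circ2 p q = p + q + (p.2 * q.2, 0) by rewrite /circ2 !pairD /= addr0.
    rewrite !gadd circF; congr (_ + _).
    rewrite ddA /g !fixg ?fixMn //.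
    case: p q => [p1 [[|[|?]] ?]] [q1 [[|[|?]] ?]] //=; rewrite ?mulr0n ?mulr1n ?addr0 //.
- left.
  pose g := fun p : 'Z_4 => x *+ val p.
  have Hx4 : x *+ 4 = 0.
    by rewrite (_ : 4%N = (2 + 2)%N) // mulrnDr mulr2n Exx.
  have gadd p q : g (p + q) = g p + g q.
    by rewrite /g /= (@modMn _ x 4) // mulrnDr.
  have Hx3 : ~~ fixb (x *+ 3) by rewrite fixMn_odd.
  apply: (@iso_of _ _ _ _ g) => //.
  + apply: inj_add => //.
    move=> [[|[|[|[|r]]]] Hr] //= H; try by apply/eqP.
    * by move: H; rewrite /g /= mulr1n => /(nf_ne0 Hx).
    * by move: H Hd; rewrite /g /= mulr2n Exx => ->; rewrite eqxx.
    * by move: H; rewrite /g /= => /(nf_ne0 Hx3).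
  + move=> t; case: (allA t) => ->.
    * by exists 0; rewrite /g /= mulr0n.
    * by exists 2; rewrite /g /= mulr2n.
    * by exists 1; rewrite /g /= mulr1n.
    * by exists 3; rewrite /g /= !mulrS mulr0n addr0 addrA Exx addrC.
  + move=> p q; have -> : circ1 p q = p + q + 2 * p * q by [].
    rewrite !gadd circF; congr (_ + _).
    rewrite ddA /g !fixMn_odd //.
    case: p q => [[|[|[|[|?]]]] ?] [[|[|[|[|?]]]] ?] //=; rewrite ?mulr0n ?mulr2n ?Exx //.
Qed.

Lemma caseB z k : ~~ fixb z -> dd z = z + z -> dd (z + z) = k -> k != 0 ->
  (forall f, fixb f -> dd f = 0 \/ dd f = k) ->
  exists f : T -> 'Z_2 * 'Z_4, brace_iso circ circ3 f.
Proof.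
move=> Hz Hdz Hk Hk0 HK.
have Hzz : fixb (z + z) by rewrite fix_nf_add // negbK.
have Hkf : fixb k by rewrite -Hk dfix.
have Hdk : dd k = 0 by rewrite -Hk ddd.
have Hk2 : k + k = 0 := fix2 Hkf.
have Hz4 : z *+ 4 = 0.
  by rewrite (_ : 4%N = (2 + 2)%N) // mulrnDr mulr2n fix2.
have ddz0 : dd (z *+ 0) = 0 by rewrite mulr0n dd0.
have ddz1 : dd (z *+ 1) = z *+ 2 by rewrite mulr1n Hdz mulr2n.
have ddz2 : dd (z *+ 2) = k by rewrite mulr2n.
have ddz3 : dd (z *+ 3) = k *+ 1 + z *+ 2.
  rewrite (_ : 3%N = (1 + 2)%N) // mulrnDr ddDf ?ddz1 ?ddz2 ?mulr1n 1?addrC //.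
pose g := fun p : 'Z_2 * 'Z_4 => k *+ val p.1 + z *+ val p.2.
have gadd p q : g (p + q) = g p + g q.
  rewrite /g pairD /= (@modMn _ k 2) ?mulr2n // (@modMn _ z 4) //.
  by rewrite !mulrnDr addrACA.
have gdd p : dd (g p) = dd (z *+ val p.2).
  by rewrite /g addrC ddDf ?fixMn // (ddMn (f := k)) // Hdk mul0rn addr0.
have gfix p : fixb (g p) = ~~ odd (val p.2) by rewrite /g fixg ?fixMn.
have surjF t : fixb t -> exists u, g u = t.
  move=> Ht; have [a <-] := dd_surj Ht.
  case Ha: (fixb a).
    case: (HK a Ha) => ->; first by exists (0, 0); rewrite /g /= !mulr0n addr0.
    by exists (1, 0); rewrite /g /= mulr1n mulr0n addr0.
  have Haz : fixb (a - z) by apply: shift_any; rewrite ?Ha.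
  have -> : dd a = dd z + dd (a - z) by rewrite -ddDf // addrC subrK.
  rewrite Hdz; case: (HK _ Haz) => ->.
    by exists (0, 2); rewrite /g /= mulr0n add0r addr0 mulr2n.
  by exists (1, 2); rewrite /g /= mulr1n mulr2n addrC.
apply: (@iso_of _ _ _ _ g) => //.
- apply: inj_add => //.
  move=> [[[|[|e]] He] [[|[|[|[|y]]]] Hy]] //= H; try by apply/eqP.
  all: try by move: (gfix (Ordinal He, Ordinal Hy)); rewrite H fix0.
  all: try (by move: H Hk0; rewrite /g /= mulr1n mulr0n addr0 => ->; rewrite eqxx).
  all: try (by move: (gdd (Ordinal He, Ordinal Hy)); rewrite H dd0 /= ddz2 => E; move: Hk0; rewrite -E eqxx).
- move=> t; case Ht: (fixb t); first exact: surjF.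
  have [u Hu] := surjF _ (shift_any Hz (negbT Ht)).
  by exists (u + (0, 1)); rewrite gadd Hu /g /= mulr0n mulr1n add0r subrK.
- move=> p q; have -> : circ3 p q = p + q + (eps_mul p.2 q.2, 2 * p.2 * q.2).
    by rewrite /circ3 !pairD.
  rewrite !gadd circF; congr (_ + _).
  rewrite gdd gfix.
  case: p q => [p1 [[|[|[|[|?]]]] ?]] [q1 [[|[|[|[|?]]]] ?]] //=;
    rewrite ?ddz0 ?ddz1 ?ddz2 ?ddz3 /g /= ?mulr0n ?mulr1n ?add0r ?addr0 //.
Qed.

Lemma main_sec :
  (exists f : T -> 'Z_4, brace_iso circ circ1 f) \/
  (exists f : T -> 'Z_2 * 'Z_2, brace_iso circ circ2 f) \/
  (exists f : T -> 'Z_2 * 'Z_4, brace_iso circ circ3 f).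
Proof.
have [HA|HB] := boolP [forall f, fixb f ==> (dd f == 0)].
  have HA' f : fixb f -> dd f = 0 by move=> Hf; apply/eqP; move/forallP/(_ f): HA; rewrite Hf.
  by case: (caseA HA') => H; [left|right; left].
right; right.
move/forallPn: HB => [k0]; rewrite negb_imply => /andP [Hk0f Hk0].
set K := dd (dd x).
have HK f : fixb f -> dd f = 0 \/ dd f = K.
  move=> Hf; have [a <-] := dd_surj Hf.
  case Ha: (fixb a); first by left; rewrite ddd.
  right; rewrite (ddO (negbT Ha)) ddDf ?dfix // (ddd (O_shift (negbT Ha))) addr0 //.
have HK0 : K != 0 by case: (HK _ Hk0f) Hk0 => ->; rewrite ?eqxx.
have Hxx : dd (x + x) = K by rewrite ddxx.
have [a Ea] := dd_surj xx_fix.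
case Ha: (fixb a).
  by move: HK0; rewrite -Hxx -Ea ddd // eqxx.
have Eb : x + x = dd x + dd (a - x) by rewrite -Ea (ddO (negbT Ha)).
have Hax : fixb (a - x) by apply: O_shift; rewrite Ha.
case: (HK _ Hax) => Em; rewrite Em in Eb.
  rewrite addr0 in Eb.
  by apply: (caseB Hx) => //; rewrite Eb.
apply: (@caseB (x + (x + x)) K) => //.
- by rewrite (fixDl Hb) // xx_fix.
- rewrite ddDf ?xx_fix // Hxx -Eb.
  by rewrite addrACA (fix2 xx_fix) addr0.
- by rewrite addrACA (fix2 xx_fix) addr0.
Qed.

End Main.

Theorem mainTheorem20 (T : finZmodType) (circ : T -> T -> T) :
  is_skew_brace circ ->
  #|Theta_vertices circ| = 1%N ->
  (exists f : T -> 'Z_4, brace_iso circ circ1 f) \/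
  (exists f : T -> 'Z_2 * 'Z_2, brace_iso circ circ2 f) \/
  (exists f : T -> 'Z_2 * 'Z_4, brace_iso circ circ3 f).
Proof.
move=> Hb H1; move/eqP: H1 => /cards1P [V EV].
have : V \in Theta_vertices circ by rewrite EV set11.
case/imsetP => x; rewrite inE => Hx EVx.
rewrite theta_orbitE // in Hx EVx.
apply: (@main_sec T circ Hb x); first by rewrite -card_orb.
move=> c Hc.
have : theta_orbit circ c \in Theta_vertices circ.
  by apply/imsetP; exists c; rewrite // inE theta_orbitE // card_orb.
rewrite EV inE EVx theta_orbitE // => /eqP <-.
exact: orb_self.
Qed.
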